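(* Let $X=\bigsqcup_{\lambda\in\Lambda}G_\lambda$ be an MCQ, $R$ a ring, $M$ a left $R$-module, and let $f_1,f_2:X\times X\to R$, $\phi_1:X\times X\to M$, $\phi_2:\bigsqcup_\lambda(G_\lambda\times G_\lambda)\to M$ be maps. On the set $\widetilde X=\bigsqcup_{\lambda\in\Lambda}(G_\lambda\times M)$ define $(x,u)\triangleleft(y,v):=(x\triangleleft y,\ f_1(x,y)u+f_2(x,y)v+\phi_1(x,y))$ for all $(x,u),(y,v)\in\widetilde X$, and $(a,u)(b,v):=(ab,\ u+f_1(a,a^{-1})v+\phi_2(a,b))$ for all $(a,u),(b,v)\in G_\lambda\times M$. If $(f_1,f_2;\phi_1,\phi_2)$ is an augmented MCQ Alexander pair, then $\widetilde X$ with these operations is an MCQ whose groups are the $G_\lambda\times M$; moreover the identity of $G_\lambda\times M$ is $(e_\lambda,-\phi_2(e_\lambda,e_\lambda))$ and the inverse of $(a,u)\in G_\lambda\times M$ is $(a^{-1},\,-f_1(a,a)u-\phi_2(a^{-1},a)-\phi_2(e_\lambda,e_\lambda))$. Conversely, if $M=R$ and $\widetilde X$ with these operations is an MCQ with groups $G_\lambda\times R$, then $(f_1,f_2;\phi_1,\phi_2)$ is an augmented MCQ Alexander pair.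
   Context: A multiple conjugation quandle (MCQ) is a set $X=\bigsqcup_{\lambda\in\Lambda}G_\lambda$ that is a disjoint union of groups $G_\lambda$, together with a binary operation $\triangleleft:X\times X\to X$ such that: (i) for all $a,b\in G_\lambda$, $a\triangleleft b=b^{-1}ab$; (ii) for all $x\in X$ and $a,b\in G_\lambda$, $x\triangleleft e_\lambda=x$ and $x\triangleleft(ab)=(x\triangleleft a)\triangleleft b$, where $e_\lambda$ is the identity of $G_\lambda$; (iii) for all $x,y,z\in X$, $(x\triangleleft y)\triangleleft z=(x\triangleleft z)\triangleleft(y\triangleleft z)$; (iv) for all $x\in X$ and $a,b\in G_\lambda$, the elements $a\triangleleft x$ and $b\triangleleft x$ lie in a common group $G_\mu$ and $(ab)\triangleleft x=(a\triangleleft x)(b\triangleleft x)$. For $x\in X$, $G_x$ denotes the group $G_\lambda$ containing $x$, $e_x$ its identity, and $x^{-1}$ the inverse of $x$ in $G_x$. $\bigsqcup_{\lambda}(G_\lambda\times G_\lambda)$ is the set of pairs of elements lying in a common group $G_\lambda$. Rings have a multiplicative identity $1\neq0$ and need not be commutative. An MCQ Alexander pair is a pair of maps $f_1,f_2:X\times X\to R$ such that: (A1) for all $a,b\in G_\lambda$: $f_1(a,b)+f_2(a,b)=f_1(a,a^{-1}b)$; (A2) for all $a,b\in G_\lambda$ and $x\in X$: $f_1(a,x)=f_1(b,x)$ and $f_2(ab,x)=f_2(a,x)+f_1(b\triangleleft x,a^{-1}\triangleleft x)f_2(b,x)$; (A3) for all $x\in X$ and $a,b\in G_\lambda$: $f_1(x,e_\lambda)=1$,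 $f_1(x,ab)=f_1(x\triangleleft a,b)f_1(x,a)$, $f_2(x,ab)=f_1(x\triangleleft a,b)f_2(x,a)$; (A4) for all $x,y,z\in X$: $f_1(x\triangleleft y,z)f_1(x,y)=f_1(x\triangleleft z,y\triangleleft z)f_1(x,z)$; $f_1(x\triangleleft y,z)f_2(x,y)=f_2(x\triangleleft z,y\triangleleft z)f_1(y,z)$; $f_2(x\triangleleft y,z)=f_1(x\triangleleft z,y\triangleleft z)f_2(x,z)+f_2(x\triangleleft z,y\triangleleft z)f_2(y,z)$. For an MCQ Alexander pair $(f_1,f_2)$ and a left $R$-module $M$, an $(f_1,f_2)$-twisted 2-cocycle is a pair of maps $\phi_1:X\times X\to M$, $\phi_2:\bigsqcup_\lambda(G_\lambda\times G_\lambda)\to M$ such that: (T1) for all $a,b,c\in G_\lambda$: $\phi_2(a,b)+\phi_2(ab,c)=f_1(a,a^{-1})\phi_2(b,c)+\phi_2(a,bc)$; (T2) for all $a,b\in G_\lambda$: $f_1(b,b^{-1})\phi_1(a,b)+\phi_2(b,b^{-1}ab)=\phi_2(a,b)$; (T3) for all $x\in X$, $a,b\in G_\lambda$: $f_2(x,ab)\phi_2(a,b)+\phi_1(x,ab)=f_1(x\triangleleft a,b)\phi_1(x,a)+\phi_1(x\triangleleft a,b)$; (T4) for all $x,y,z\in X$: $f_1(x\triangleleft y,z)\phi_1(x,y)+\phi_1(x\triangleleft y,z)=f_1(x\triangleleft z,y\triangleleft z)\phi_1(x,z)+f_2(x\triangleleft z,y\triangleleft z)\phi_1(y,z)+\phi_1(x\triangleleft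 z,y\triangleleft z)$; (T5) for all $a,b\in G_\lambda$, $x\in X$: $f_1(ab,x)\phi_2(a,b)+\phi_1(ab,x)=\phi_1(a,x)+f_1(a\triangleleft x,a^{-1}\triangleleft x)\phi_1(b,x)+\phi_2(a\triangleleft x,b\triangleleft x)$. A quadruple $(f_1,f_2;\phi_1,\phi_2)$ is an augmented MCQ Alexander pair if $(f_1,f_2)$ is an MCQ Alexander pair and $(\phi_1,\phi_2)$ is an $(f_1,f_2)$-twisted 2-cocycle. *)

(* Defs.v *)
From HB Require Import structures.
From mathcomp Require Import all_boot all_order all_algebra.
Set Implicit Arguments. Unset Strict Implicit. Unset Printing Implicit Defensive.
Import GRing.Theory.
Local Open Scope ring_scope.

(* A multiple conjugation quandle X = ⊔_{l : L} G_l is encoded by: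
   - lab : X -> L      the index of the group containing x (so G_l = lab^-1 l)
   - mul : X -> X -> X the group product (only meaningful on pairs in a common G_l)
   - e   : L -> X      e l = identity of G_l
   - inv : X -> X      inverse of x in G_x
   - tri : X -> X -> X the operation ◁ *)

Definition same_grp {X L : Type} (lab : X -> L) (a b : X) := lab a = lab b.

Definition is_group_family {X L : Type} (lab : X -> L) (mul : X -> X -> X)
  (e : L -> X) (inv : X -> X) : Prop :=
  [/\ (forall l, lab (e l) = l),
      (forall a b, lab a = lab b -> lab (mul a b) = lab a),
      (forall a, lab (inv a) = lab a),
      (forall a b c, lab a = lab b -> lab b = lab c ->
          mul (mul a b) c = mul a (mul b c)) &
      ((forall a, mul (e (lab a)) a = a /\ mul a (e (lab a)) = a) /\
       (forall a, mul (inv a) a = e (lab a) /\ mul a (inv a) = e (lab a)))].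

Definition is_MCQ {X L : Type} (lab : X -> L) (mul : X -> X -> X)
  (e : L -> X) (inv : X -> X) (tri : X -> X -> X) : Prop :=
  [/\ is_group_family lab mul e inv,
      (* (i) *)
      (forall a b, lab a = lab b -> tri a b = mul (mul (inv b) a) b),
      (* (ii) *)
      (forall x l, tri x (e l) = x) /\
      (forall x a b, lab a = lab b -> tri x (mul a b) = tri (tri x a) b),
      (* (iii) *)
      (forall x y z, tri (tri x y) z = tri (tri x z) (tri y z)) &
      (* (iv) *)
      (forall x a b, lab a = lab b ->
         lab (tri a x) = lab (tri b x) /\
         tri (mul a b) x = mul (tri a x) (tri b x))].

Definition alex_pair {X L : Type} (lab : X -> L) (mul : X -> X -> X)
  (e : L -> X) (inv : X -> X) (tri : X -> X -> X) (R : nzRingType)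
  (f1 f2 : X -> X -> R) : Prop :=
  [/\ (* A1 *)
      (forall a b, lab a = lab b -> f1 a b + f2 a b = f1 a (mul (inv a) b)),
      (* A2 *)
      (forall a b x, lab a = lab b ->
         f1 a x = f1 b x /\
         f2 (mul a b) x = f2 a x + f1 (tri b x) (tri (inv a) x) * f2 b x),
      (* A3 *)
      (forall x l, f1 x (e l) = 1) /\
      (forall x a b, lab a = lab b ->
         f1 x (mul a b) = f1 (tri x a) b * f1 x a /\
         f2 x (mul a b) = f1 (tri x a) b * f2 x a) &
      (* A4 *)
      (forall x y z,
         [/\ f1 (tri x y) z * f1 x y = f1 (tri x z) (tri y z) * f1 x z,
             f1 (tri x y) z * f2 x y = f2 (tri x z) (tri y z) * f1 y z &
             f2 (tri x y) z = f1 (tri x z) (tri y z) * f2 x z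
                              + f2 (tri x z) (tri y z) * f2 y z])].

(* (f1,f2)-twisted 2-cocycle (T1)-(T5). phi2 is given as a map X -> X -> M;
   only its values on pairs lying in a common group are ever used. *)
Definition twisted_cocycle {X L : Type} (lab : X -> L) (mul : X -> X -> X)
  (e : L -> X) (inv : X -> X) (tri : X -> X -> X) (R : nzRingType)
  (M : lmodType R) (f1 f2 : X -> X -> R) (phi1 phi2 : X -> X -> M) : Prop :=
  [/\ (* T1 *)
      (forall a b c, lab a = lab b -> lab b = lab c ->
         phi2 a b + phi2 (mul a b) c
         = f1 a (inv a) *: phi2 b c + phi2 a (mul b c)),
      (* T2 *)
      (forall a b, lab a = lab b ->
         f1 b (inv b) *: phi1 a b + phi2 b (mul (mul (inv b) a) b) = phi2 a b),
      (* T3 *)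
      (forall x a b, lab a = lab b ->
         f2 x (mul a b) *: phi2 a b + phi1 x (mul a b)
         = f1 (tri x a) b *: phi1 x a + phi1 (tri x a) b),
      (* T4 *)
      (forall x y z,
         f1 (tri x y) z *: phi1 x y + phi1 (tri x y) z
         = f1 (tri x z) (tri y z) *: phi1 x z + f2 (tri x z) (tri y z) *: phi1 y z
           + phi1 (tri x z) (tri y z)) &
      (* T5 *)
      (forall a b x, lab a = lab b ->
         f1 (mul a b) x *: phi2 a b + phi1 (mul a b) x
         = phi1 a x + f1 (tri a x) (tri (inv a) x) *: phi1 b x
           + phi2 (tri a x) (tri b x))].

Definition augmented_alex_pair {X L : Type} (lab : X -> L) (mul : X -> X -> X)
  (e : L -> X) (inv : X -> X) (tri : X -> X -> X) (R : nzRingType)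
  (M : lmodType R) (f1 f2 : X -> X -> R) (phi1 phi2 : X -> X -> M) : Prop :=
  alex_pair lab mul e inv tri f1 f2 /\
  twisted_cocycle lab mul e inv tri f1 f2 phi1 phi2.

(* The extension  X~ = ⊔_l (G_l × M), represented as X * M with label lab ∘ fst. *)
Section Tilde.
Variables (X L : Type) (lab : X -> L) (mul : X -> X -> X) (e : L -> X)
  (inv : X -> X) (tri : X -> X -> X) (R : nzRingType) (M : lmodType R)
  (f1 f2 : X -> X -> R) (phi1 phi2 : X -> X -> M).

Definition labT (p : X * M) : L := lab p.1.
Definition triT (p q : X * M) : X * M :=
  (tri p.1 q.1, f1 p.1 q.1 *: p.2 + f2 p.1 q.1 *: q.2 + phi1 p.1 q.1).
Definition mulT (p q : X * M) : X * M :=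
  (mul p.1 q.1, p.2 + f1 p.1 (inv p.1) *: q.2 + phi2 p.1 q.1).
Definition eT (l : L) : X * M := (e l, - phi2 (e l) (e l)).
Definition invT (p : X * M) : X * M :=
  (inv p.1, - (f1 p.1 p.1 *: p.2) - phi2 (inv p.1) p.1
            - phi2 (e (lab p.1)) (e (lab p.1))).
End Tilde.

(* Main.v *)
Require Import Defs.
From HB Require Import structures.
From mathcomp Require Import all_boot all_order all_algebra.
Local Open Scope ring_scope.
Set Implicit Arguments. Unset Strict Implicit. Unset Printing Implicit Defensive.
Import GRing.Theory.

Inductive zx := zA of nat | zD of zx & zx | zN of zx | z0.

Fixpoint zev (V : zmodType) (env : seq V) t : V :=
  match t with
  | zA n => nth 0 env n
  | zD a b => zev env a + zev env b
  | zN a => - zev env a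
  | z0 => 0
  end.

Fixpoint zco t (n : nat) : int :=
  match t with
  | zA m => ((m == n) : nat)%:Z
  | zD a b => zco a n + zco b n
  | zN a => - zco a n
  | z0 => 0
  end.

Lemma zev_atom (V : zmodType) (env : seq V) m :
  nth 0 env m = \sum_(i < size env) nth 0 env i *~ ((m == i) : nat)%:Z.
Proof.
elim: env m => [|x env IH] m /=; first by rewrite big_ord0 nth_nil.
rewrite big_ord_recl /=; case: m => [|m] /=.
  rewrite big1 ?addr0 //= => i _; by [].
by rewrite add0r IH.
Qed.

Lemma zev_sum (V : zmodType) (env : seq V) t :
  zev env t = \sum_(i < size env) nth 0 env i *~ zco t i.
Proof.
elim: t => [m|a IHa b IHb|a IHa|] /=.
- exact: zev_atom.
- by rewrite IHa IHb -big_split /=; apply: eq_bigr => i _; rewrite mulrzDr.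
- by rewrite IHa -sumrN; apply: eq_bigr => i _; rewrite mulrNz.
- by rewrite big1.
Qed.

Lemma zev_eq (V : zmodType) (env : seq V) l r :
  all (fun i => zco l i == zco r i) (iota 0 (size env)) -> zev env l = zev env r.
Proof.
move=> /allP H; rewrite !zev_sum; apply: eq_bigr => i _.
by rewrite (eqP (H i _)) // mem_iota /= add0n.
Qed.

Lemma zuse (V : zmodType) (P Q l r : V) : P = Q -> l - r = P - Q -> l = r.
Proof. by move=> -> /eqP; rewrite subrr subr_eq0 => /eqP. Qed.

Ltac zlookup x l :=
  match l with
  | ?y :: _ => let _ := match goal with _ => unify x y end in constr:(0%N)
  | _ :: ?l' => let n := zlookup x l' in constr:(n.+1)
  end.

Ltac zmem x l :=
  match l with
  | ?y :: _ => let _ := match goal with _ => unify x y end in constr:(true)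
  | _ :: ?l' => zmem x l'
  | _ => constr:(false)
  end.

Ltac zcollect t acc :=
  match t with
  | (?a + ?b)%R => let acc' := zcollect a acc in zcollect b acc'
  | (- ?a)%R => zcollect a acc
  | 0%R => acc
  | _ => let b := zmem t acc in
         match b with
         | true => acc
         | false => constr:(t :: acc)
         end
  end.

Ltac zreify t env :=
  match t with
  | (?a + ?b)%R => let ra := zreify a env in let rb := zreify b env in constr:(zD ra rb)
  | (- ?a)%R => let ra := zreify a env in constr:(zN ra)
  | 0%R => constr:(z0)
  | _ => let n := zlookup t env in constr:(zA n)
  end.

Ltac zmodeq :=
  match goal with
  | |- @eq ?V ?l ?r =>
    let env := zcollect l (@nil V) in
    let env := zcollect r env in
    let rl := zreify l env in
    let rr := zreify r env in
    apply: (@zev_eq _ env rl rr); vm_compute; reflexivity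
  end.



Section Grp.
Variables (X L : Type) (lab : X -> L) (mul : X -> X -> X) (e : L -> X)
  (inv : X -> X).
Hypothesis HG : is_group_family lab mul e inv.

Lemma g_labe l : lab (e l) = l. Proof. by move: HG; rewrite /is_group_family; case=> H *; apply: H. Qed.
Lemma g_labM a b : lab a = lab b -> lab (mul a b) = lab a. Proof. by move: HG; rewrite /is_group_family; case=> _ H *; apply: H. Qed.
Lemma g_labV a : lab (inv a) = lab a. Proof. by move: HG; rewrite /is_group_family; case=> _ _ H *; apply: H. Qed.
Lemma g_mulA a b c : lab a = lab b -> lab b = lab c -> mul (mul a b) c = mul a (mul b c).
Proof. by move: HG; rewrite /is_group_family; case=> _ _ _ H *; apply: H. Qed.
Lemma g_mul1 a : mul (e (lab a)) a = a. Proof. by move: HG; rewrite /is_group_family; case=> _ _ _ _ [H _]; case: (H a). Qed.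
Lemma g_mul1r a : mul a (e (lab a)) = a. Proof. by move: HG; rewrite /is_group_family; case=> _ _ _ _ [H _]; case: (H a). Qed.
Lemma g_mulV a : mul (inv a) a = e (lab a). Proof. by move: HG; rewrite /is_group_family; case=> _ _ _ _ [_ H]; case: (H a). Qed.
Lemma g_mulVr a : mul a (inv a) = e (lab a). Proof. by move: HG; rewrite /is_group_family; case=> _ _ _ _ [_ H]; case: (H a). Qed.

Lemma g_solve_r y z : lab y = lab z -> mul y z = e (lab y) -> z = inv y.
Proof.
move=> yz H.
have : mul (inv y) (mul y z) = mul (inv y) (e (lab y)) by rewrite H.
have E : e (lab y) = e (lab (inv y)) by rewrite g_labV.
rewrite -g_mulA ?g_labV // g_mulV {2}E g_mul1r yz g_mul1 //.
Qed.

Lemma g_idem y : mul y y = y -> y = e (lab y).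
Proof.
move=> H.
have : mul (mul y y) (inv y) = mul y (inv y) by rewrite H.
by rewrite g_mulA ?g_labV // g_mulVr g_mul1r.
Qed.

Lemma g_invK a : inv (inv a) = a.
Proof. by symmetry; apply: g_solve_r; [rewrite g_labV | rewrite g_mulV g_labV]. Qed.

Lemma g_inve l : inv (e l) = e l.
Proof.
symmetry; apply: g_solve_r => //. by rewrite g_labe -{1}(g_labe l) g_mul1.
Qed.

Lemma g_invM a b : lab a = lab b -> inv (mul (inv b) a) = mul (inv a) b.
Proof.
move=> ab; symmetry; apply: g_solve_r.
  by rewrite !g_labM ?g_labV.
have l1 : lab (inv b) = lab a by rewrite g_labV.
have l2 : lab (inv a) = lab b by rewrite g_labV.
rewrite g_mulA ?g_labM ?g_labV //.
rewrite -(g_mulA (a:=a)) ?g_labV // g_mulVr ab.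
by rewrite g_mul1 g_mulV.
Qed.

Lemma g_conj a b : lab a = lab b -> mul b (mul (mul (inv b) a) b) = mul a b.
Proof.
move=> ab.
have l1 : lab (inv b) = lab a by rewrite g_labV.
rewrite -g_mulA ?g_labM ?g_labV // -(g_mulA (a:=b)) ?g_labV // g_mulVr -ab g_mul1 //.
Qed.

Lemma g_invMM a b : lab a = lab b -> inv (mul a b) = mul (inv b) (inv a).
Proof.
move=> ab; symmetry; apply: g_solve_r.
  by rewrite !g_labM ?g_labV.
have l1 : lab (inv b) = lab (inv a) by rewrite !g_labV.
rewrite g_mulA ?g_labM ?g_labV //.
rewrite -(g_mulA (a:=b)) ?g_labV // g_mulVr -ab.
have -> : e (lab a) = e (lab (inv a)) by rewrite g_labV.
by rewrite g_mul1 g_mulVr g_labV.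
Qed.

Lemma g_solve_l x a : lab x = lab a -> mul x a = e (lab a) -> x = inv a.
Proof.
move=> xa H.
have : mul (mul x a) (inv a) = mul (e (lab a)) (inv a) by rewrite H.
have E : e (lab a) = e (lab (inv a)) by rewrite g_labV.
rewrite g_mulA ?g_labV // g_mulVr -xa g_mul1r xa E g_mul1 //.
Qed.

Lemma g_mulee l : mul (e l) (e l) = e l.
Proof. by rewrite -{1}(g_labe l) g_mul1. Qed.

End Grp.

Section MCQ.
Variables (X L : Type) (lab : X -> L) (mul : X -> X -> X) (e : L -> X)
  (inv : X -> X) (tri : X -> X -> X).
Hypothesis HM : is_MCQ lab mul e inv tri.

Lemma m_grp : is_group_family lab mul e inv. Proof. by case: HM. Qed.
Lemma m_conj a b : lab a = lab b -> tri a b = mul (mul (inv b) a) b.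
Proof. by case: HM => _ H *; apply: H. Qed.
Lemma m_trie x l : tri x (e l) = x.
Proof. by case: HM => _ _ [H _] *; apply: H. Qed.
Lemma m_triM x a b : lab a = lab b -> tri x (mul a b) = tri (tri x a) b.
Proof. by case: HM => _ _ [_ H] *; apply: H. Qed.
Lemma m_sd x y z : tri (tri x y) z = tri (tri x z) (tri y z).
Proof. by case: HM => _ _ _ H *; apply: H. Qed.
Lemma m_labT x a b : lab a = lab b -> lab (tri a x) = lab (tri b x).
Proof. by case: HM => _ _ _ _ H ab; case: (H x a b ab). Qed.
Lemma m_triMd x a b : lab a = lab b -> tri (mul a b) x = mul (tri a x) (tri b x).
Proof. by case: HM => _ _ _ _ H ab; case: (H x a b ab). Qed.

Let G := m_grp.

Lemma m_lab_in a b : lab a = lab b -> lab (tri a b) = lab a.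
Proof.
by move=> ab; rewrite m_conj // !(g_labM G) ?(g_labV G) // (g_labM G) ?(g_labV G).
Qed.

Lemma m_tri_e_id l x : tri (e l) x = e (lab (tri (e l) x)).
Proof.
apply: (g_idem G).
have E : e l = mul (e l) (e l).
  by rewrite -{2}(g_labe G l) (g_mul1 G).
rewrite -m_triMd; first by rewrite -E.
by [].
Qed.

Lemma m_lab_trie l x a : lab a = l -> lab (tri (e l) x) = lab (tri a x).
Proof. by move=> al; apply: m_labT; rewrite (g_labe G). Qed.

Lemma m_triV x a : inv (tri a x) = tri (inv a) x.
Proof.
symmetry; apply: (g_solve_r G).
  by apply: m_labT; rewrite (g_labV G).
rewrite -m_triMd ?(g_labV G) // (g_mulVr G) m_tri_e_id.
by congr e; apply: m_lab_trie.
Qed.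

Lemma m_labTV x a : lab (tri (inv a) x) = lab (tri a x).
Proof. by apply: m_labT; rewrite (g_labV G). Qed.

Lemma m_triK x a : tri (tri x a) (inv a) = x.
Proof. by rewrite -m_triM ?(g_labV G) // (g_mulVr G) m_trie. Qed.

Lemma m_trie_conj a : tri (e (lab a)) a = e (lab a).
Proof.
rewrite m_conj ?(g_labe G) //.
have -> : e (lab a) = e (lab (inv a)) by rewrite (g_labV G).
by rewrite (g_mul1r G) (g_mulV G) (g_labV G).
Qed.

Lemma m_self a : tri a a = a.
Proof.
rewrite m_conj // (g_mulV G) (g_mul1 G) //.
Qed.

End MCQ.

Section Alex.
Set Default Proof Using "All".
Variables (X L : Type) (lab : X -> L) (mul : X -> X -> X) (e : L -> X)
  (inv : X -> X) (tri : X -> X -> X) (R : nzRingType) (f1 f2 : X -> X -> R).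
Hypothesis HM : is_MCQ lab mul e inv tri.
Hypothesis HA : alex_pair lab mul e inv tri f1 f2.
Let G := m_grp HM.
Variables (M : lmodType R) (phi1 phi2 : X -> X -> M).
Hypothesis HT : twisted_cocycle lab mul e inv tri f1 f2 phi1 phi2.

Lemma a_A1 a b : lab a = lab b -> f1 a b + f2 a b = f1 a (mul (inv a) b).
Proof. by case: HA => H *; apply: H. Qed.
Lemma a_f1g a b x : lab a = lab b -> f1 a x = f1 b x.
Proof. by case: HA => _ H _ _ ab; case: (H a b x ab). Qed.
Lemma a_A2 a b x : lab a = lab b ->
  f2 (mul a b) x = f2 a x + f1 (tri b x) (tri (inv a) x) * f2 b x.
Proof. by case: HA => _ H _ _ ab; case: (H a b x ab). Qed.
Lemma a_f1e x l : f1 x (e l) = 1.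
Proof. by case: HA => _ _ [H _] _; apply: H. Qed.
Lemma a_A3a x a b : lab a = lab b -> f1 x (mul a b) = f1 (tri x a) b * f1 x a.
Proof. by case: HA => _ _ [_ H] _ ab; case: (H x a b ab). Qed.
Lemma a_A3b x a b : lab a = lab b -> f2 x (mul a b) = f1 (tri x a) b * f2 x a.
Proof. by case: HA => _ _ [_ H] _ ab; case: (H x a b ab). Qed.
Lemma a_A4a x y z : f1 (tri x y) z * f1 x y = f1 (tri x z) (tri y z) * f1 x z.
Proof. by case: HA => _ _ _ H; case: (H x y z). Qed.
Lemma a_A4b x y z : f1 (tri x y) z * f2 x y = f2 (tri x z) (tri y z) * f1 y z.
Proof. by case: HA => _ _ _ H; case: (H x y z). Qed.
Lemma a_A4c x y z : f2 (tri x y) z = f1 (tri x z) (tri y z) * f2 x z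
                              + f2 (tri x z) (tri y z) * f2 y z.
Proof. by case: HA => _ _ _ H; case: (H x y z). Qed.

Lemma a_f1aa a : f1 a (inv a) * f1 a a = 1.
Proof.
have := a_A3a a (esym (g_labV G a)).
by rewrite (g_mulVr G) a_f1e (m_self HM) => <-.
Qed.

Lemma a_f1aa' a : f1 a a * f1 a (inv a) = 1.
Proof.
have := a_A3a a (g_labV G a).
rewrite (g_mulV G) a_f1e => ->; congr (_ * _).
apply: a_f1g; rewrite (m_lab_in HM) //; by rewrite (g_labV G).
Qed.

Lemma a_f2e x a : f2 x a = f1 x a * f2 x (e (lab a)).
Proof.
have := a_A3b x (g_labe G (lab a)).
by rewrite (g_mul1 G) (m_trie HM).
Qed.

Lemma a_f2e_tri x a : f2 (tri x a) (e (lab a)) = f1 x a * f2 x (e (lab a)) * f1 a (inv a).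
Proof.
have := a_A4b x (e (lab a)) a.
rewrite (m_trie HM) (m_trie_conj HM) => ->.
rewrite (a_f1g _ (b:=a)) ?(g_labe G) // -mulrA a_f1aa' mulr1 //.
Qed.

Lemma a_f2v x a b : lab a = lab b -> f2 x (mul a b) * f1 a (inv a) = f2 (tri x a) b.
Proof.
move=> ab; rewrite a_A3b // [f2 x a]a_f2e [f2 (tri x a) b]a_f2e -ab a_f2e_tri.
by rewrite !mulrA.
Qed.



Lemma a_f1mi a b : lab a = lab b ->
  f1 (mul a b) (inv (mul a b)) = f1 a (inv a) * f1 b (inv b).
Proof.
move=> ab; rewrite (g_invMM G) // a_A3a ?(g_labV G) //.
congr (_ * _); apply: a_f1g.
- rewrite (m_lab_in HM) ?(g_labM G) ?(g_labV G) //.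
- by rewrite (g_labM G).
Qed.

Lemma t_T1 a b c : lab a = lab b -> lab b = lab c ->
  phi2 a b + phi2 (mul a b) c = f1 a (inv a) *: phi2 b c + phi2 a (mul b c).
Proof. by case: HT => H *; apply: H. Qed.
Lemma t_T2 a b : lab a = lab b ->
  f1 b (inv b) *: phi1 a b + phi2 b (mul (mul (inv b) a) b) = phi2 a b.
Proof. by case: HT => _ H *; apply: H. Qed.
Lemma t_T3 x a b : lab a = lab b ->
  f2 x (mul a b) *: phi2 a b + phi1 x (mul a b)
  = f1 (tri x a) b *: phi1 x a + phi1 (tri x a) b.
Proof. by case: HT => _ _ H *; apply: H. Qed.
Lemma t_T4 x y z :
  f1 (tri x y) z *: phi1 x y + phi1 (tri x y) z
  = f1 (tri x z) (tri y z) *: phi1 x z + f2 (tri x z) (tri y z) *: phi1 y z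
    + phi1 (tri x z) (tri y z).
Proof. by case: HT => _ _ _ H *; apply: H. Qed.
Lemma t_T5 a b x : lab a = lab b ->
  f1 (mul a b) x *: phi2 a b + phi1 (mul a b) x
  = phi1 a x + f1 (tri a x) (tri (inv a) x) *: phi1 b x
    + phi2 (tri a x) (tri b x).
Proof. by case: HT => _ _ _ _ H *; apply: H. Qed.

Lemma t_phi2e c : phi2 (e (lab c)) c = phi2 (e (lab c)) (e (lab c)).
Proof.
have := t_T1 (erefl (lab (e (lab c)))) (g_labe G (lab c)).
rewrite (g_mul1 G) -{3}(g_labe G (lab c)) (g_mul1 G) (g_inve G) a_f1e scale1r.
by move/addIr.
Qed.

Lemma t_phi2ae a :
  phi2 a (e (lab a)) = f1 a (inv a) *: phi2 (e (lab a)) (e (lab a)).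
Proof.
have := t_T1 (esym (g_labe G (lab a))) (erefl (lab (e (lab a)))).
rewrite (g_mul1r G) (g_mulee G).
by move/addIr.
Qed.

Lemma tilde_grp : is_group_family (labT lab (M:=M)) (mulT mul inv f1 phi2)
  (eT e phi2) (invT lab e inv f1 phi2).
Proof.
rewrite /is_group_family; split.
- by move=> l; rewrite /labT /eT /= (g_labe G).
- by move=> [a u] [b v]; rewrite /labT /= => ab; apply: (g_labM G).
- by move=> [a u]; rewrite /labT /invT /= (g_labV G).
- move=> [a u] [b v] [c w]; rewrite /labT /= => ab bc; rewrite /mulT /=.
  congr pair; first exact: (g_mulA G).
  rewrite a_f1mi // !scalerDr !scalerA.
  apply: (zuse (t_T1 ab bc)); zmodeq.
split => -[a u]; rewrite /labT /mulT /eT /invT /=; split.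
- congr pair; first exact: (g_mul1 G).
  rewrite (g_inve G) a_f1e scale1r t_phi2e; zmodeq.
- congr pair; first exact: (g_mul1r G).
  rewrite t_phi2ae scalerN; zmodeq.
- congr pair; first exact: (g_mulV G).
  rewrite (g_invK G) (a_f1g _ (b:=a)) ?(g_labV G) //; zmodeq.
- congr pair; first exact: (g_mulVr G).
  rewrite !scalerDr !scalerN scalerA a_f1aa scale1r.
  have := t_T1 (esym (g_labV G a)) (g_labV G a).
  rewrite (g_mulVr G) (g_mulV G) t_phi2e t_phi2ae => H.
  apply: (zuse H); zmodeq.
Qed.

Lemma t_phi2e' l c : lab c = l -> phi2 (e l) c = phi2 (e l) (e l).
Proof. by move=> <-; apply: t_phi2e. Qed.

Lemma tilde_i (p q : X * M) : labT lab p = labT lab q ->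
  triT tri f1 f2 phi1 p q =
  mulT mul inv f1 phi2 (mulT mul inv f1 phi2 (invT lab e inv f1 phi2 q) p) q.
Proof.
case: p q => [a u] [b v]; rewrite /labT /triT /mulT /invT /= => ab.
congr pair; first exact: (m_conj HM).
have lVb : lab (inv b) = lab b by rewrite (g_labV G).
have lVba : lab (inv b) = lab a by rewrite (g_labV G).
have lc : lab (mul (mul (inv b) a) b) = lab b by rewrite !(g_labM G) ?(g_labM G) ?lVb.
have H2 := t_T2 ab.
have H2' : f1 b b *: (f1 b (inv b) *: phi1 a b + phi2 b (mul (mul (inv b) a) b))
  = f1 b b *: phi2 a b by rewrite H2.
rewrite scalerDr scalerA a_f1aa' scale1r in H2'.
have H1a := t_T1 lVba ab.
have H1b := t_T1 lVb (esym lc).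
rewrite (g_conj G) // (g_mulV G) (t_phi2e' lc) in H1b.
rewrite (g_invK G) in H1a H1b.
have K1 : f1 (inv b) b = f1 b b by apply: a_f1g.
have K2 : f1 a b = f1 b b by apply: a_f1g.
rewrite K1 in H1a H1b.
rewrite (g_invK G) (g_invM G) // [f1 (mul (inv b) a) _](a_f1g _ (b:=a)) ?(g_labM G) // -a_A1 //.
rewrite scalerDl K1 K2.
apply: (zuse (esym H1a)); apply: (zuse H2'); apply: (zuse H1b); zmodeq.
Qed.

Lemma tilde_iia p l : triT tri f1 f2 phi1 p (eT e phi2 l) = p.
Proof.
case: p => [x u]; rewrite /triT /eT /=.
congr pair; first exact: (m_trie HM).
have := t_T3 x (erefl (lab (e l))).
rewrite (g_mulee G) (m_trie HM) a_f1e scale1r => /addIr H.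
rewrite scale1r scalerN H; zmodeq.
Qed.

Lemma tilde_iib p q r : labT lab q = labT lab r ->
  triT tri f1 f2 phi1 p (mulT mul inv f1 phi2 q r) =
  triT tri f1 f2 phi1 (triT tri f1 f2 phi1 p q) r.
Proof.
case: p q r => [x w] [a u] [b v]; rewrite /labT /triT /mulT /= => ab.
congr pair; first exact: (m_triM HM).
rewrite !scalerDr !scalerA a_f2v // a_A3a //.
apply: (zuse (t_T3 x ab)); rewrite a_A3b //; zmodeq.
Qed.

Lemma tilde_iii p q r :
  triT tri f1 f2 phi1 (triT tri f1 f2 phi1 p q) r =
  triT tri f1 f2 phi1 (triT tri f1 f2 phi1 p r) (triT tri f1 f2 phi1 q r).
Proof.
case: p q r => [x u] [y v] [z w]; rewrite /triT /=.
congr pair; first exact: (m_sd HM).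
rewrite !scalerDr !scalerA (a_A4a x y z) (a_A4b x y z) (a_A4c x y z) scalerDl.
apply: (zuse (t_T4 x y z)); zmodeq.
Qed.

Lemma tilde_iv r p q : labT lab p = labT lab q ->
  labT lab (triT tri f1 f2 phi1 p r) = labT lab (triT tri f1 f2 phi1 q r) /\
  triT tri f1 f2 phi1 (mulT mul inv f1 phi2 p q) r =
  mulT mul inv f1 phi2 (triT tri f1 f2 phi1 p r) (triT tri f1 f2 phi1 q r).
Proof.
case: r p q => [x w] [a u] [b v]; rewrite /labT /triT /mulT /= => ab.
split; first exact: (m_labT HM).
congr pair; first exact: (m_triMd HM).
have H5 := t_T5 x ab.
have H4 := a_A4a a (inv a) x.
have E1 : f1 (mul a b) x = f1 a x by apply: a_f1g; rewrite (g_labM G).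
have E2 : f1 b x = f1 a x by apply: a_f1g.
have E3 : f1 (tri a (inv a)) x = f1 a x.
  by apply: a_f1g; rewrite (m_lab_in HM) // (g_labV G).
have E4 : f1 (tri b x) (tri (inv a) x) = f1 (tri a x) (tri (inv a) x).
  by apply: a_f1g; apply: (m_labT HM).
rewrite E3 in H4. rewrite E1 in H5.
rewrite (m_triV HM) a_A2 // E1 E2 E4 !scalerDr !scalerA H4 scalerDl.
apply: (zuse H5); zmodeq.
Qed.

Lemma tilde_MCQ : is_MCQ (labT lab (M:=M)) (mulT mul inv f1 phi2)
  (eT e phi2) (invT lab e inv f1 phi2) (triT tri f1 f2 phi1).
Proof.
split.
- exact: tilde_grp.
- exact: tilde_i.
- split; [exact: tilde_iia | exact: tilde_iib].
- exact: tilde_iii.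
- move=> x a b; exact: tilde_iv.
Qed.

End Alex.

Section Conv.
Set Default Proof Using "All".
Variables (X L : Type) (lab : X -> L) (mul : X -> X -> X) (e : L -> X)
  (inv : X -> X) (tri : X -> X -> X) (R : nzRingType) (f1 f2 : X -> X -> R)
  (phi1 phi2 : X -> X -> R^o) (eR : L -> X * R^o) (invR : X * R^o -> X * R^o).
Hypothesis HM : is_MCQ lab mul e inv tri.
Hypothesis HT : is_MCQ (labT lab (M := R^o)) (mulT mul inv f1 phi2) eR invR
               (triT tri f1 f2 phi1).
Let G := m_grp HM.
Let GT := m_grp HT.

Lemma sc1 (c : R) : c *: (1 : R^o) = c.
Proof. exact: mulr1. Qed.

Lemma scR (c : R) (v : R^o) : c *: v = c * v.
Proof. by []. Qed.

Lemma c_eR1 l : (eR l).1 = e l.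
Proof.
have H := congr1 fst (g_mul1 GT (e l, 0)).
rewrite /labT /mulT /= (g_labe G) in H.
have H2 := g_labe GT l; rewrite /labT in H2.
by rewrite -(g_mul1r G (eR l).1) H2.
Qed.

Lemma c_eRE l : eR l = (e l, (eR l).2).
Proof. by rewrite -c_eR1; case: (eR l). Qed.

Lemma c_invR1 p : (invR p).1 = inv p.1.
Proof.
have H := congr1 fst (g_mulV GT p).
rewrite /labT /mulT /= c_eR1 in H.
apply: (g_solve_l G) => //.
by have := g_labV GT p; rewrite /labT.
Qed.

Lemma c_invRE p : invR p = (inv p.1, (invR p).2).
Proof. by rewrite -c_invR1; case: (invR p). Qed.

Lemma c_phi2e b : phi2 (e (lab b)) b = - (eR (lab b)).2.
Proof.
have H := congr1 snd (g_mul1 GT (b, 0)).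
rewrite /labT /mulT /= c_eRE /= scaler0 addr0 in H.
apply: (zuse H); zmodeq.
Qed.

Lemma c_t b v : (invR (b, v)).2
  = (eR (lab b)).2 - phi2 (inv b) b - f1 (inv b) b *: v.
Proof.
have H := congr1 snd (g_mulV GT (b, v)).
rewrite /labT /mulT /= [invR _]c_invRE [eR _]c_eRE /= (g_invK G) in H.
rewrite -H; zmodeq.
Qed.

Lemma c_rinv b v : v + f1 b (inv b) *: ((eR (lab b)).2 - phi2 (inv b) b - f1 (inv b) b *: v)
  + phi2 b (inv b) = (eR (lab b)).2.
Proof.
have H := congr1 snd (g_mulVr GT (b, v)).
rewrite /labT /mulT /= [invR _]c_invRE [eR _]c_eRE /= c_t in H.
exact: H.
Qed.

Lemma c_inv11 b : f1 b (inv b) * f1 (inv b) b = 1.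
Proof.
have H0 := c_rinv b 0; have H1 := c_rinv b 1.
rewrite scaler0 subr0 in H0.
rewrite sc1 !scalerDr !scalerN in H1.
rewrite -scR.
apply: (zuse (esym H1)); apply: (zuse H0); rewrite !scalerDr !scalerN; zmodeq.
Qed.

Ltac csimp H := rewrite ?scalerDr ?scalerN ?scaler0 ?scalerA ?sc1 ?oppr0 ?addr0 ?add0r in H.

Lemma c_iii x y z u v w :
  f1 (tri x y) z *: (f1 x y *: u + f2 x y *: v + phi1 x y) + f2 (tri x y) z *: w
  + phi1 (tri x y) z =
  f1 (tri x z) (tri y z) *: (f1 x z *: u + f2 x z *: w + phi1 x z)
  + f2 (tri x z) (tri y z) *: (f1 y z *: v + f2 y z *: w + phi1 y z)
  + phi1 (tri x z) (tri y z).
Proof. exact: (congr1 snd (m_sd HT (x, u) (y, v) (z, w))). Qed.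

Lemma c_T4 x y z :
  f1 (tri x y) z *: phi1 x y + phi1 (tri x y) z
  = f1 (tri x z) (tri y z) *: phi1 x z + f2 (tri x z) (tri y z) *: phi1 y z
    + phi1 (tri x z) (tri y z).
Proof. have H := c_iii x y z 0 0 0; csimp H; apply: (zuse H); zmodeq. Qed.

Lemma c_A4 x y z :
  [/\ f1 (tri x y) z * f1 x y = f1 (tri x z) (tri y z) * f1 x z,
      f1 (tri x y) z * f2 x y = f2 (tri x z) (tri y z) * f1 y z &
      f2 (tri x y) z = f1 (tri x z) (tri y z) * f2 x z
                       + f2 (tri x z) (tri y z) * f2 y z].
Proof.
have H0 := c_iii x y z 0 0 0; csimp H0.
have Hu := c_iii x y z 1 0 0; csimp Hu.
have Hv := c_iii x y z 0 1 0; csimp Hv.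
have Hw := c_iii x y z 0 0 1; csimp Hw.
split.
- apply: (zuse Hu); apply: (zuse (esym H0)); zmodeq.
- apply: (zuse Hv); apply: (zuse (esym H0)); zmodeq.
- apply: (zuse Hw); apply: (zuse (esym H0)); zmodeq.
Qed.

Lemma c_T1 a b c : lab a = lab b -> lab b = lab c ->
  phi2 a b + phi2 (mul a b) c = f1 a (inv a) *: phi2 b c + phi2 a (mul b c).
Proof.
move=> ab bc.
have H := congr1 snd (g_mulA GT (a:=(a,0)) (b:=(b,0)) (c:=(c,0)) ab bc).
rewrite /mulT /= in H; csimp H; apply: (zuse H); zmodeq.
Qed.

Lemma c_A3e x l : f1 x (e l) = 1.
Proof.
have H0 := congr1 snd (m_trie HT (x, 0) l).
have H1 := congr1 snd (m_trie HT (x, 1) l).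
rewrite /triT /= [eR l]c_eRE /= in H0 H1.
csimp H0; csimp H1.
apply: (zuse H1); apply: (zuse (esym H0)); zmodeq.
Qed.

Lemma c_iib x a b w u v : lab a = lab b ->
  f1 x (mul a b) *: w + f2 x (mul a b) *: (u + f1 a (inv a) *: v + phi2 a b)
  + phi1 x (mul a b) =
  f1 (tri x a) b *: (f1 x a *: w + f2 x a *: u + phi1 x a) + f2 (tri x a) b *: v
  + phi1 (tri x a) b.
Proof. move=> ab; exact: (congr1 snd (m_triM HT (x, w) (a:=(a,u)) (b:=(b,v)) ab)). Qed.

Lemma c_T3 x a b : lab a = lab b ->
  f2 x (mul a b) *: phi2 a b + phi1 x (mul a b)
  = f1 (tri x a) b *: phi1 x a + phi1 (tri x a) b.
Proof. move=> ab; have H := c_iib x 0 0 0 ab; csimp H; apply: (zuse H); zmodeq. Qed.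

Lemma c_A3 x a b : lab a = lab b ->
  f1 x (mul a b) = f1 (tri x a) b * f1 x a /\
  f2 x (mul a b) = f1 (tri x a) b * f2 x a.
Proof.
move=> ab; have H0 := c_iib x 0 0 0 ab; csimp H0.
have Hw := c_iib x 1 0 0 ab; csimp Hw.
have Hu := c_iib x 0 1 0 ab; csimp Hu.
split.
- apply: (zuse Hw); apply: (zuse (esym H0)); zmodeq.
- apply: (zuse Hu); apply: (zuse (esym H0)); zmodeq.
Qed.

Lemma c_iv a b x u v w : lab a = lab b ->
  f1 (mul a b) x *: (u + f1 a (inv a) *: v + phi2 a b) + f2 (mul a b) x *: w
  + phi1 (mul a b) x =
  f1 a x *: u + f2 a x *: w + phi1 a x
  + f1 (tri a x) (tri (inv a) x) *: (f1 b x *: v + f2 b x *: w + phi1 b x)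
  + phi2 (tri a x) (tri b x).
Proof.
move=> ab; have H := congr1 snd (m_triMd HT (x, w) (a:=(a,u)) (b:=(b,v)) ab).
by rewrite /triT /mulT /= (m_triV HM) in H.
Qed.

Lemma c_T5 a b x : lab a = lab b ->
  f1 (mul a b) x *: phi2 a b + phi1 (mul a b) x
  = phi1 a x + f1 (tri a x) (tri (inv a) x) *: phi1 b x
    + phi2 (tri a x) (tri b x).
Proof. move=> ab; have H := c_iv x 0 0 0 ab; csimp H; apply: (zuse H); zmodeq. Qed.

Lemma c_A2 a b x : lab a = lab b ->
  f1 (mul a b) x = f1 a x /\
  f2 (mul a b) x = f2 a x + f1 (tri a x) (tri (inv a) x) * f2 b x.
Proof.
move=> ab; have H0 := c_iv x 0 0 0 ab; csimp H0.
have Hu := c_iv x 1 0 0 ab; csimp Hu.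
have Hw := c_iv x 0 0 1 ab; csimp Hw.
split.
- apply: (zuse Hu); apply: (zuse (esym H0)); zmodeq.
- apply: (zuse Hw); apply: (zuse (esym H0)); zmodeq.
Qed.

Lemma c_f1g a b x : lab a = lab b -> f1 a x = f1 b x.
Proof.
move=> ab.
have Ha := proj1 (c_A2 x (g_labe G (lab a))).
have Hb := proj1 (c_A2 x (g_labe G (lab b))).
rewrite (g_mul1 G) in Ha; rewrite (g_mul1 G) in Hb.
by rewrite Ha Hb ab.
Qed.

Lemma c_phi2e' l c : lab c = l -> phi2 (e l) c = - (eR l).2.
Proof. by move=> <-; apply: c_phi2e. Qed.

Lemma c_i a b u v : lab a = lab b ->
  f1 a b *: u + f2 a b *: v + phi1 a b =
  ((eR (lab b)).2 - phi2 (inv b) b - f1 (inv b) b *: v) + f1 (inv b) b *: u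
  + phi2 (inv b) a + f1 (mul (inv b) a) (inv (mul (inv b) a)) *: v
  + phi2 (mul (inv b) a) b.
Proof.
move=> ab; have H := congr1 snd (m_conj HT (a:=(a,u)) (b:=(b,v)) ab).
by rewrite /triT /mulT /= [invR _]c_invRE /= c_t (g_invK G) in H.
Qed.

Lemma c_A1 a b : lab a = lab b -> f1 a b + f2 a b = f1 a (mul (inv a) b).
Proof.
move=> ab; have H0 := c_i 0 0 ab; csimp H0.
have Hu := c_i 1 0 ab; csimp Hu.
have Hv := c_i 0 1 ab; csimp Hv.
have E : f1 (mul (inv b) a) (inv (mul (inv b) a)) = f1 a (mul (inv a) b).
  rewrite (g_invM G) //; apply: c_f1g; rewrite (g_labM G) ?(g_labV G) //.
rewrite E in Hv.
apply: (zuse Hu); apply: (zuse (esym H0)); apply: (zuse Hv);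
  apply: (zuse (esym H0)); zmodeq.
Qed.

Lemma c_T2 a b : lab a = lab b ->
  f1 b (inv b) *: phi1 a b + phi2 b (mul (mul (inv b) a) b) = phi2 a b.
Proof.
move=> ab; have H0 := c_i 0 0 ab; csimp H0.
have lVb : lab (inv b) = lab b by rewrite (g_labV G).
have lVba : lab (inv b) = lab a by rewrite (g_labV G).
have lc : lab (mul (mul (inv b) a) b) = lab b.
  by rewrite !(g_labM G) ?(g_labM G) ?lVb.
have T1a := c_T1 lVba ab.
have T1b := c_T1 lVb (esym lc).
rewrite (g_conj G) // (g_mulV G) (c_phi2e' lc) in T1b.
rewrite (g_invK G) in T1a T1b.
have kT1a : f1 b (inv b) *: (phi2 (inv b) a + phi2 (mul (inv b) a) b) =
  f1 b (inv b) *: (f1 (inv b) b *: phi2 a b + phi2 (inv b) (mul a b)) by rewrite T1a.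
have kT1b : f1 b (inv b) *: (phi2 (inv b) b + - (eR (lab b)).2) =
  f1 b (inv b) *: (f1 (inv b) b *: phi2 b (mul (mul (inv b) a) b)
                   + phi2 (inv b) (mul a b)) by rewrite T1b.
rewrite !scalerDr !scalerA c_inv11 !scale1r in kT1a kT1b.
rewrite H0 !scalerDr !scalerN.
apply: (zuse kT1a); apply: (zuse (esym kT1b)); rewrite ?scalerN; zmodeq.
Qed.

Lemma c_aug : augmented_alex_pair lab mul e inv tri f1 f2 phi1 phi2.
Proof.
split.
- split.
  + exact: c_A1.
  + move=> a b x ab; split; first exact: c_f1g.
    rewrite (proj2 (c_A2 x ab)); congr (_ + _ * _).
    by apply: c_f1g; apply: (m_labT HM).
  + split; [exact: c_A3e | move=> x a b ab; exact: c_A3].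
  + exact: c_A4.
- split.
  + exact: c_T1.
  + exact: c_T2.
  + exact: c_T3.
  + exact: c_T4.
  + move=> a b x ab; exact: c_T5.
Qed.

End Conv.

Unset Implicit Arguments.

Theorem proposition2p4 (X L : Type) (lab : X -> L) (mul : X -> X -> X)
  (e : L -> X) (inv : X -> X) (tri : X -> X -> X) (R : nzRingType)
  (f1 f2 : X -> X -> R) :
  is_MCQ lab mul e inv tri ->
  (forall (M : lmodType R) (phi1 phi2 : X -> X -> M),
     augmented_alex_pair lab mul e inv tri f1 f2 phi1 phi2 ->
     is_MCQ (labT lab (M := M))
            (mulT mul inv f1 phi2)
            (eT e phi2)
            (invT lab e inv f1 phi2)
            (triT tri f1 f2 phi1)) /\
  (forall phi1 phi2 : X -> X -> R^o,
     (exists (eR : L -> X * R^o) (invR : X * R^o -> X * R^o),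
        is_MCQ (labT lab (M := R^o)) (mulT mul inv f1 phi2) eR invR
               (triT tri f1 f2 phi1)) ->
     augmented_alex_pair lab mul e inv tri f1 f2 phi1 phi2).
Proof.
move=> HM; split.
- move=> M phi1 phi2 [HA HT]; exact: (tilde_MCQ HM HA HT).
- move=> phi1 phi2 [eR [invR HT]]; exact: (c_aug HM HT).
Qed.
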